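(* Let $1\le l_1\le l_2\le\cdots\le l_n$ be integers and $A=\{a_1^{2^{l_1}-1},\ldots,a_n^{2^{l_n}-1}\}$. Then for every integer $m\ge0$, $$|C_m(A)|=\sum\prod_{i=1}^{l_n}\binom{\overline{k_{2^{i-1}}}}{\lambda_i},$$ the sum over all tuples $(\lambda_1,\ldots,\lambda_{l_n})$ of non-negative integers with $\lambda_1+2\lambda_2+2^2\lambda_3+\cdots+2^{l_n-1}\lambda_{l_n}=m$ and $\lambda_i\le\overline{k_{2^{i-1}}}$ for $i=1,\ldots,l_n$.
   Context: A multiset $A=\{a_1^{k_1},\ldots,a_n^{k_n}\}$ consists of distinct elements $a_1,\ldots,a_n$ with positive integer multiplicities $k_1,\ldots,k_n$ (here $k_i=2^{l_i}-1$). A submultiset of $A$ is a multiset $\{a_1^{r_1},\ldots,a_n^{r_n}\}$ with integers $0\le r_i\le k_i$, of cardinality $r_1+\cdots+r_n$. $C_m(A)$ denotes the set of all submultisets of $A$ of cardinality $m$. For each integer $j\ge1$, $\overline{k_j}=|\{i\in\{1,\ldots,n\}: k_i\ge j\}|$. *)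

(* Defs.v *)
From mathcomp Require Import all_boot.
Set Implicit Arguments. Unset Strict Implicit. Unset Printing Implicit Defensive.

(* A multiset A = {a_1^{k_1},...,a_N^{k_N}} with distinct elements is determined
   by its multiplicity vector k : 'I_N -> nat.  A submultiset is given by its
   multiplicity vector r with 0 <= r_i <= k_i; we encode r as a finite function
   into 'I_(kmax.+1), kmax = max_i k_i (big enough to hold every allowed r_i). *)
Definition kmax N (k : 'I_N -> nat) : nat := \max_(i < N) k i.

Definition C_m N (k : 'I_N -> nat) (m : nat) : {set {ffun 'I_N -> 'I_(kmax k).+1}} :=
  [set r : {ffun 'I_N -> 'I_(kmax k).+1} | [forall i, (r i : nat) <= k i] & (\sum_(i < N) (r i : nat) == m)].

Definition kbar N (k : 'I_N -> nat) (j : nat) : nat := #|[set i : 'I_N | j <= k i]|.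

(* Main.v *)
Require Import Defs.
From mathcomp Require Import all_boot.
From mathcomp Require Import zify.
Set Implicit Arguments. Unset Strict Implicit. Unset Printing Implicit Defensive.

Definition bin L (b : nat -> bool) := \sum_(j < L) 2 ^ j * b j.

Lemma eq_bin L b c : (forall j, b j = c j) -> bin L b = bin L c.
Proof. by move=> h; apply: eq_bigr => j _; rewrite h. Qed.

Lemma binS L b : bin L.+1 b = b 0 + 2 * bin L (fun j => b j.+1).
Proof.
rewrite /bin big_ord_recl /= expn0 mul1n big_distrr /=; congr (_ + _).
by apply: eq_bigr => j _; rewrite expnS mulnA.
Qed.

Lemma bin_lt L b : bin L b < 2 ^ L.
Proof.
elim: L b => [|L IH] b; first by rewrite /bin big_ord0.
rewrite binS expnS; have := IH (fun j => b j.+1); case: (b 0) => /=; lia.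
Qed.

Lemma bin_bit L b t : t < L -> odd (bin L b %/ 2 ^ t) = b t.
Proof.
elim: t L b => [|t IH] [|L] b //= ht.
  by rewrite expn0 divn1 binS oddD oddM /=; case: (b 0).
rewrite binS expnS divnMA.
have -> : (b 0 + 2 * bin L (fun j => b j.+1)) %/ 2 = bin L (fun j => b j.+1).
  by case: (b 0) => /=; rewrite ?add0n ?mulKn // [1 + _]addnC mulnC divnMDl // divn_small // addn0.
by rewrite IH.
Qed.

Lemma bin_bits L r : r < 2 ^ L -> bin L (fun j => odd (r %/ 2 ^ j)) = r.
Proof.
elim: L r => [|L IH] r hr.
  by rewrite /bin big_ord0; move: hr; rewrite expn0; case: r.
rewrite binS expn0 divn1.
rewrite (@eq_bin L _ (fun j => odd ((r %/ 2) %/ 2 ^ j))); last first.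
  by move=> j; rewrite expnS divnMA.
rewrite IH; last by rewrite ltn_divLR // mulnC -expnS.
by rewrite divn2 -[RHS]odd_double_half -muln2 mulnC.
Qed.

Lemma bin_low L l b : (forall j, l <= j -> b j = false) -> bin L b < 2 ^ l.
Proof.
move=> hb; elim: L => [|L IH]; first by rewrite /bin big_ord0 expn_gt0.
case: (leqP L.+1 l) => hL.
  by apply: leq_trans (bin_lt _ _) _; rewrite leq_exp2l.
rewrite /bin big_ord_recr /= hb ?muln0 ?addn0 //.
Qed.

Lemma sum_ind (I : finType) (A : {set I}) a :
  \sum_(i : I) a * (i \in A) = a * #|A|.
Proof.
rewrite -sum1_card big_distrr /= [RHS]big_mkcond /=.
by apply: eq_bigr => i _; case: (i \in A); rewrite ?muln1 ?muln0.
Qed.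

Theorem theorem5p3 (n : nat) (l : 'I_n.+1 -> nat)
  (hl1 : forall i, 1 <= l i)
  (hmono : forall i j : 'I_n.+1, i <= j -> l i <= l j)
  (m : nat) :
  let k := fun i => 2 ^ l i - 1 in
  let L := l ord_max in
  #|C_m k m| =
  \sum_(lam : {ffun 'I_L -> 'I_(n.+2)} |
          (\sum_(i < L) 2 ^ i * lam i == m) &&
          [forall i : 'I_L, (lam i : nat) <= kbar k (2 ^ i)])
     \prod_(i < L) 'C(kbar k (2 ^ i), lam i).
Proof.
move=> k L.
have hk : forall i x, (x <= k i) = (x < 2 ^ l i).
  move=> i x; rewrite /k; have := expn_gt0 2 (l i); lia.
have hLmax : forall i, l i <= L by move=> i; apply: hmono; apply: leq_ord.
have hL1 : 0 < L by apply: hl1.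
clearbody k L.
case: L hLmax hL1 => // L hLmax _.
set N := n.+1.
pose K j := [set i : 'I_N | 2 ^ j <= k i].
pose Sset := [set S : {ffun 'I_L.+1 -> {set 'I_N}} |
   [forall j, S j \subset K j] & (\sum_(j < L.+1) 2 ^ j * #|S j| == m)].
have step1 : #|C_m k m| = #|Sset|.
  pose g (r : {ffun 'I_N -> 'I_(kmax k).+1}) : {ffun 'I_L.+1 -> {set 'I_N}} :=
    [ffun j : 'I_L.+1 => [set i | odd (r i %/ 2 ^ j)]].
  have hlt : forall r, r \in C_m k m -> forall i, (r i : nat) < 2 ^ L.+1.
    move=> r; rewrite inE => /andP[/forallP hr _] i.
    apply: leq_trans (_ : 2 ^ l i <= _); first by rewrite -hk.
    by rewrite leq_exp2l.
  have hrec : forall r, r \in C_m k m -> forall i,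
      (r i : nat) = \sum_(j < L.+1) 2 ^ j * (i \in g r j).
    move=> r hr i; rewrite -{1}(bin_bits (hlt r hr i)) /bin.
    by apply: eq_bigr => j _; rewrite ffunE inE.
  have ginj : {in C_m k m &, injective g}.
    move=> r1 r2 h1 h2 e; apply/ffunP => i; apply: val_inj.
    by rewrite /= (hrec _ h1) (hrec _ h2) e.
  rewrite -(card_in_imset ginj); suff -> : g @: C_m k m = Sset by [].
  apply/eqP; rewrite eqEsubset; apply/andP; split.
    apply/subsetP => _ /imsetP[r hr ->].
    rewrite inE; apply/andP; split.
      apply/forallP => j; apply/subsetP => i; rewrite ffunE !inE => hodd.
      have : 0 < r i %/ 2 ^ j by move: hodd; case: (r i %/ 2 ^ j).
      rewrite divn_gt0 ?expn_gt0 // => h.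
      move: hr; rewrite inE => /andP[/forallP hr _]; exact: leq_trans h (hr i).
    move: (hr); rewrite inE => /andP[_ /eqP <-].
    rewrite (eq_bigr (fun j : 'I_L.+1 => \sum_i 2 ^ j * (i \in g r j))); last first.
      by move=> j _; rewrite sum_ind.
    rewrite exchange_big /=; apply/eqP; apply: eq_bigr => i _; by rewrite (hrec _ hr).
  apply/subsetP => S hS.
  pose b (i : 'I_N) := fun j : nat => (j < L.+1) && (i \in S (inord j)).
  have hbS : forall i, bin L.+1 (b i) = \sum_(j < L.+1) 2 ^ j * (i \in S j).
    by move=> i; apply: eq_bigr => j _; rewrite /b ltn_ord inord_val.
  move: (hS); rewrite inE => /andP[/forallP hSK hm].
  have hblt : forall i, bin L.+1 (b i) < 2 ^ l i.
    move=> i; apply: bin_low => j hj; rewrite /b; case: ltnP => //= hjL.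
    apply/negP => hin; have := subsetP (hSK (inord j)) i hin.
    by rewrite inE inordK // hk ltn_exp2l // ltnNge hj.
  have hkmax : forall i, k i <= kmax k.
    by move=> i; rewrite /kmax (bigD1 i) //= leq_maxl.
  pose f : {ffun 'I_N -> 'I_(kmax k).+1} := [ffun i => inord (bin L.+1 (b i))].
  have hf : forall i, (f i : nat) = bin L.+1 (b i).
    move=> i; rewrite ffunE inordK // ltnS; apply: leq_trans (hkmax i).
    rewrite hk; exact: hblt.
  have hfC : f \in C_m k m.
    rewrite inE; apply/andP; split.
      by apply/forallP => i; rewrite hf hk.
    rewrite (eq_bigr (fun i => \sum_(j < L.+1) 2 ^ j * (i \in S j))); last first.
      by move=> i _; rewrite hf hbS.
    rewrite exchange_big /=.
    rewrite (eq_bigr (fun j : 'I_L.+1 => 2 ^ j * #|S j|)) //.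
    by move=> j _; rewrite sum_ind.
  apply/imsetP; exists f => //.
  apply/ffunP => j; apply/setP => i.
  by rewrite !ffunE inE hf bin_bit // /b ltn_ord inord_val.
have step2 : #|Sset| = \sum_(lam : {ffun 'I_L.+1 -> 'I_(n.+2)} |
          (\sum_(i < L.+1) 2 ^ i * lam i == m) &&
          [forall i : 'I_L.+1, (lam i : nat) <= kbar k (2 ^ i)])
     \prod_(i < L.+1) 'C(kbar k (2 ^ i), lam i).
  rewrite -sum1_card.
  pose p (S : {ffun 'I_L.+1 -> {set 'I_N}}) : {ffun 'I_L.+1 -> 'I_n.+2} :=
    [ffun j => inord #|S j|].
  have hcardN : forall (A : {set 'I_N}), #|A| < n.+2.
    by move=> A; rewrite ltnS -[X in _ <= X](card_ord N); apply: max_card.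
  have hp : forall S j, (p S j : nat) = #|S j| by move=> S j; rewrite ffunE inordK.
  rewrite (partition_big p (fun lam : {ffun 'I_L.+1 -> 'I_n.+2} =>
     (\sum_(i < L.+1) 2 ^ i * lam i == m) &&
     [forall i : 'I_L.+1, (lam i : nat) <= kbar k (2 ^ i)])); last first.
    move=> S; rewrite inE => /andP[/forallP hS hm]; apply/andP; split.
      by rewrite (eq_bigr (fun j : 'I_L.+1 => 2 ^ j * #|S j|)) // => j _; rewrite hp.
    by apply/forallP => j; rewrite hp; apply: subset_leq_card; apply: hS.
  apply: eq_bigr => lam /andP[hs /forallP hb].
  pose F := fun j : 'I_L.+1 => [pred T : {set 'I_N} | (T \subset K j) && (#|T| == lam j)].
  transitivity #|(family F : simpl_pred {ffun 'I_L.+1 -> {set 'I_N}})|.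
    rewrite -sum1_card; apply: eq_bigl => S; apply/idP/idP.
      rewrite inE => /andP[/andP[/forallP hS hm] /eqP hpl].
      by apply/familyP => j; rewrite inE hS /= -hpl ffunE inordK.
    move=> /familyP hF; rewrite inE; apply/andP; split; last first.
      apply/eqP/ffunP => j; apply: val_inj; rewrite /= ffunE inordK //.
      by have := hF j; rewrite inE => /andP[_ /eqP].
    apply/andP; split.
      by apply/forallP => j; have := hF j; rewrite inE => /andP[].
    rewrite (eq_bigr (fun j : 'I_L.+1 => 2 ^ j * lam j)) // => j _.
    by have := hF j; rewrite inE => /andP[_ /eqP ->].
  rewrite card_family foldrE big_image /=.
  apply: eq_bigr => j _.
  rewrite /kbar -cards_draws; apply: eq_card => T; rewrite !inE.
  done.
by rewrite step1 step2.
Qed.
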